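(* Let $N,L,Q$ be positive integers, let $V=\{v_1,\dots,v_N\}$, and let $t=(t_i(l))_{i\in[N],\,l\in[L]}$ be an arbitrary assignment with $t_i(l)\in[Q]\cup\{\emptyset\}$. Then $t$ is the natural labeling of some community structure $(V,\mathcal{C},\mathcal{S})$ with communities indexed by $[Q]$ that satisfies WPP if and only if $$\forall i,j\in[N],\ \forall l,k\in[L]:\quad \big(t_i(l)=t_j(k)\neq\emptyset\big)\ \Longrightarrow\ \big(t_i(k)=t_j(k)\big).$$
   Context: A community structure on $V$ with $L$ layers is a triple $(V,\mathcal{C},\mathcal{S})$ where $\mathcal{C}=\{C_1,\dots,C_Q\}$ is a family of pairwise distinct subsets $C_q\subseteq V$ (the communities, indexed by $q\in[Q]=\{1,\dots,Q\}$), and $\mathcal{S}=(S_1,\dots,S_L)$ with $S_l\subseteq\mathcal{C}$ the set of communities present in layer $l$. The triple satisfies the well partitioned property (WPP) if for every $l\in[L]$ and all $C_a,C_b\in S_l$, $C_a\cap C_b\neq\emptyset$ implies $C_a=C_b$ (i.e. $a=b$). For a triple satisfying WPP, its natural labeling is $t_i(l)=a$ if $v_i\in C_a$ and $C_a\in S_l$, and $t_i(l)=\emptyset$ if no such $a$ exists (well defined by WPP).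
   Formalization: The communities $C_1,\dots,C_Q$ form an arbitrary indexed family of subsets of V, not necessarily pairwise distinct, and each $S_l$ is a set of indices in [Q]. Each condition added here is assumed in the paper as well or is needed for the statement above to hold. *)

(* Defs.v *)
From mathcomp Require Import all_boot.
Set Implicit Arguments. Unset Strict Implicit. Unset Printing Implicit Defensive.

(* A community structure is given by C : 'I_Q -> {set 'I_N} (community C_q)
   and S : 'I_L -> {set 'I_Q} (indices of the communities present in layer l).
   A labeling is t : 'I_N -> 'I_L -> option 'I_Q  (None = the empty label). *)

Definition WPP (N L Q : nat) (C : 'I_Q -> {set 'I_N}) (S : 'I_L -> {set 'I_Q}) : Prop :=
  forall (l : 'I_L) (a b : 'I_Q), a \in S l -> b \in S l ->
    C a :&: C b != set0 -> a = b.

Definition natural_labeling (N L Q : nat) (C : 'I_Q -> {set 'I_N})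
    (S : 'I_L -> {set 'I_Q}) (t : 'I_N -> 'I_L -> option 'I_Q) : Prop :=
  forall (i : 'I_N) (l : 'I_L) (a : 'I_Q),
    t i l = Some a <-> (i \in C a /\ a \in S l).

(* Main.v *)
Require Import Defs.
From mathcomp Require Import all_boot.

Theorem theorem1 (N L Q : nat) (hN : 0 < N) (hL : 0 < L) (hQ : 0 < Q)
    (t : 'I_N -> 'I_L -> option 'I_Q) :
  (exists (C : 'I_Q -> {set 'I_N}) (S : 'I_L -> {set 'I_Q}),
      WPP C S /\ natural_labeling C S t)
  <->
  (forall (i j : 'I_N) (l k : 'I_L),
      t i l = t j k -> t j k <> None -> t i k = t j k).
Proof.
split.
- move=> [C [S [_ nat]]] i j l k E nN.
  case Ejk: (t j k) nN E => [a|] // _ E.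
  have [Ci _] := (nat i l a).1 E.
  have [_ Sk] := (nat j k a).1 Ejk.
  exact: (nat i k a).2.
- move=> H.
  have key : forall i j l l' a, t i l' = Some a -> t j l = Some a -> t i l = Some a.
    move=> i j l l' a E1 E2.
    have := H i j l' l; rewrite E1 E2 => /(_ erefl) -> //.
  exists (fun a => [set i | [exists l, t i l == Some a]]).
  exists (fun l => [set a | [exists i, t i l == Some a]]).
  split.
  + move=> l a b; rewrite !inE => /existsP [j /eqP Ej] /existsP [j' /eqP Ej'].
    case/set0Pn=> i; rewrite !inE => /andP [/existsP [l1 /eqP E1] /existsP [l2 /eqP E2]].
    have A := key _ _ _ _ _ E1 Ej.
    have B := key _ _ _ _ _ E2 Ej'.
    by move: A; rewrite B => -[].
  + move=> i l a; split.
    * move=> E; rewrite !inE; split; apply/existsP; [exists l| exists i]; exact/eqP.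
    * rewrite !inE => -[/existsP [l' /eqP E1] /existsP [j /eqP E2]].
      exact: key E1 E2.
Qed.
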